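(* Let $m\in\mathbb{N}$ and let $T$ be a $G$-spaced star with center $r$, with space $V_r$ and basis $B_r$ of cardinality $k$, and leaves $[m]$ with spaces $V_v$ ($v\in[m]$). Let $V=K[G]^n$ for some $n\in\mathbb{N}$ with $n>k$, and let $B=\{gf_i: g\in G,\ i\in[n]\}$ where $f_i$ is the $i$-th standard basis vector of $K[G]^n$. Let $T_m$ be the $G$-spaced star with the same center $(V_r,B_r)$ and leaves $[m]$, each leaf carrying $V$ with basis $B$, and let $\mathcal{X}_m=\mathcal{X}(T_m)$. If $\mathcal{X}_m$ is defined by polynomials of degree at most $D$, then so is $\mathcal{X}(T)$.
   Context: $G$ is a finite Abelian group, $K$ an infinite field over which every finite-dimensional $G$-representation splits into one-dimensional irreducibles; $K[G]$ is the regular representation, with $G$ acting on $K[G]^n$ diagonally. A $G$-spaced star with center $r$ and leaves $[m]$ assigns to each vertex $v$ a finite-dimensional $G$-representation $V_v$ with a distinguished basis $B_v$ permuted by $G$ (and the symmetric bilinear form making $B_v$ orthonormal). $L(T)=\bigotimes_{v\in[m]}V_v$. A $G$-representation of $T$ is a tuple of $G$-invariant elements $A_{rv}=\sum_{b\in B_r}b\otimes a_{b,v}\in V_r\otimes V_v$, $v\in[m]$; the equivariant model $\mathcal{X}(T)\subseteq L(T)$ is the Zariski closure of the set of all tensors $\sum_{b\in B_r}\bigotimes_{v\in[m]}a_{b,v}$. *)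

(* Defs.v *)
From HB Require Import structures.
From mathcomp Require Import all_boot all_order all_algebra all_fingroup.
From mathcomp Require Import mxrepresentation.
From mathcomp Require Import mpoly.
Set Implicit Arguments. Unset Strict Implicit. Unset Printing Implicit Defensive.
Import GRing.Theory.
Local Open Scope ring_scope.

Definition infinite_field (K : fieldType) : Prop :=
  forall s : seq K, exists x : K, x \notin s.

(* every finite-dimensional G-representation over K splits into
   one-dimensional irreducibles, i.e. is simultaneously diagonalisable *)
Definition splits_1dim (K : fieldType) (G : finGroupType) : Prop :=
  forall (d : nat) (rG : mx_representation K [set: G]%G d),
    exists2 P : 'M[K]_d, P \in unitmx &
      forall g : G, is_diag_mx (P *m rG g *m invmx P).

(* A vertex space (V_v, B_v): V_v = K^{B_v}, with G permuting the finite    *)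
(* basis B_v via a (total) action.  G-spaced star with center r and leaves  *)
(* [m] = 'I_m: basis Br with action actr at the center, Bl v with action    *)
(* actl v at leaf v.                                                        *)

(* coordinates of L(T) = \bigotimes_{v in [m]} V_v : tuples (c_v)_v *)
Definition leaf_coords (m : nat) (Bl : 'I_m -> finType) : finType :=
  {dffun forall v : 'I_m, Bl v}.

(* the set of tensors sum_{b in B_r} \bigotimes_v a_{b,v}, where
   A_{rv} = sum_b b (x) a_{b,v} is G-invariant in V_r (x) V_v;
   A v b c is the coefficient of b (x) c in A_{rv}. *)
Definition star_param_set (K : fieldType) (G : finGroupType)
    (Br : finType) (actr : {action G &-> Br})
    (m : nat) (Bl : 'I_m -> finType) (actl : forall v, {action G &-> Bl v})
  : (leaf_coords Bl -> K) -> Prop :=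
  fun x => exists A : forall v : 'I_m, Br -> Bl v -> K,
    (forall (v : 'I_m) (g : G) (b : Br) (c : Bl v),
        A v (actr b g) (actl v c g) = A v b c) /\
    (forall c : leaf_coords Bl, x c = \sum_(b : Br) \prod_(v < m) A v b (c v)).
Arguments star_param_set K {G Br} actr {m Bl} actl.

Definition peval (K : fieldType) (C : finType) (p : {mpoly K[#|C|]})
    (x : C -> K) : K :=
  p.@[fun i : 'I_#|C| => x (enum_val i)].

Definition zariski_closure (K : fieldType) (C : finType)
    (S : (C -> K) -> Prop) : (C -> K) -> Prop :=
  fun x => forall p : {mpoly K[#|C|]},
    (forall y, S y -> peval p y = 0) -> peval p x = 0.

Definition defined_in_degree (K : fieldType) (C : finType) (D : nat)
    (X : (C -> K) -> Prop) : Prop :=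
  exists P : {mpoly K[#|C|]} -> Prop,
    (forall p, P p -> (msize p <= D.+1)%N) /\
    (forall x, X x <-> (forall p, P p -> peval p x = 0)).

Definition equivariant_model (K : fieldType) (G : finGroupType)
    (Br : finType) (actr : {action G &-> Br})
    (m : nat) (Bl : 'I_m -> finType) (actl : forall v, {action G &-> Bl v}) :=
  zariski_closure (@star_param_set K G Br actr m Bl actl).
Arguments equivariant_model K {G Br} actr {m Bl} actl.

(* V = K[G]^n with basis B = {g f_i}: basis type G * 'I_n, G acting by      *)
(* multiplication on the first factor (right multiplication; G is abelian,  *)
(* so this coincides with left multiplication).                             *)

Definition regn_act (G : finGroupType) (n : nat) (x : G * 'I_n) (g : G)
  : G * 'I_n := (x.1 * g, x.2)%g.

Lemma regn_act1 (G : finGroupType) (n : nat) :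
  (@regn_act G n)^~ 1%g =1 id.
Proof. by case=> h i; rewrite /regn_act /= mulg1. Qed.

Lemma regn_actM (G : finGroupType) (n : nat) x :
  act_morph (@regn_act G n) x.
Proof. by case: x => h i a b; rewrite /regn_act /= mulgA. Qed.

Definition regn_action (G : finGroupType) (n : nat) : {action G &-> G * 'I_n}
  := TotalAction (@regn_act1 G n) (@regn_actM G n).

(* Main.v *)
Require Import Defs.
From HB Require Import structures.
From mathcomp Require Import all_boot all_order all_algebra all_fingroup.
From mathcomp Require Import mxrepresentation.
From mathcomp Require Import mpoly.
From mathcomp Require Import pgroup.
From mathcomp Require Import zify.
Set Implicit Arguments. Unset Strict Implicit. Unset Printing Implicit Defensive.
Import GRing.Theory.
Local Open Scope ring_scope.
From mathcomp Require Import ring.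
Lemma dprod_distr (R : comNzRingType) (I : finType) (T_ : I -> finType)
  (F : forall i, T_ i -> R) :
  \prod_(i : I) \sum_(c : T_ i) F i c =
  \sum_(f : {dffun forall i, T_ i}) \prod_(i : I) F i (f i).
Proof.
pose P_ := fun i => [ffun c : T_ i => F i c].
rewrite (reindex (@dffun_of_fprod I T_)) /=; last first.
  by apply/onW_bij/dffun_of_fprod_bij.
have -> : \sum_(t : fprod T_) \prod_(i : I) F i (dffun_of_fprod t i) =
   \sum_(t : fprod T_) \prod_(i in I) P_ i (t i).
  by apply: eq_bigr => t _; apply: eq_bigr => i _; rewrite /P_ !ffunE.
rewrite (big_fprod _ _ P_).
etransitivity; last first.
  exact: (@bigA_distr_big_dep R 0 1 *%R +%R I {i : I & T_ i} (tagged_with T_) (fun i j => untag 0 (P_ i) j)).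
apply: eq_bigr => i _.
transitivity (\sum_(j : T_ i) P_ i j); first by apply: eq_bigr=> j _; rewrite ffunE.
rewrite (big_tag (fun i (j : T_ i) => P_ i j) i).
apply: eq_bigl => j. by [].
Qed.

Lemma prod_eq_ind (R : comNzRingType) (I : finType) (T_ : I -> finType)
  (c d : {dffun forall i, T_ i}) :
  \prod_(i : I) ((c i == d i)%:R : R) = (c == d)%:R.
Proof.
have [->|ncd] := eqVneq c d.
  by rewrite big1 // => i _; rewrite eqxx.
have [i ni] : exists i, c i != d i.
  apply/existsP; apply: contraNT ncd => /existsPn H.
  by apply/eqP/ffunP => i; apply/eqP; move: (H i); rewrite negbK.
by rewrite (bigD1 i) //= (negPf ni) mul0r.
Qed.

Section Tensor.
Variables (K : fieldType) (G : finGroupType) (m : nat).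

Definition tmap (Bl Bl' : 'I_m -> finType) (Phi : forall v, Bl v -> Bl' v -> K)
  (x : leaf_coords Bl -> K) : leaf_coords Bl' -> K :=
  fun c' => \sum_(c : leaf_coords Bl) x c * \prod_(v < m) Phi v (c v) (c' v).

Definition equiv_map (Bl Bl' : 'I_m -> finType)
  (actl : forall v, {action G &-> Bl v}) (actl' : forall v, {action G &-> Bl' v})
  (Phi : forall v, Bl v -> Bl' v -> K) :=
  forall v g c c', Phi v (actl v c g) (actl' v c' g) = Phi v c c'.

Lemma tmap_param (Br : finType) (actr : {action G &-> Br})
  (Bl Bl' : 'I_m -> finType)
  (actl : forall v, {action G &-> Bl v}) (actl' : forall v, {action G &-> Bl' v})
  Phi x :
  equiv_map actl actl' Phi ->
  star_param_set K actr actl x -> star_param_set K actr actl' (tmap Phi x).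
Proof.
move=> HPhi [A [HA Hx]].
exists (fun v b c' => \sum_(c : Bl v) A v b c * Phi v c c'); split.
  move=> v g b c'.
  rewrite (reindex_inj (act_inj (actl v) g)) /=.
  by apply: eq_bigr => c _; rewrite HA HPhi.
move=> c'; rewrite /tmap.
under eq_bigr do rewrite Hx big_distrl /=.
rewrite exchange_big /=; apply: eq_bigr => b _.
rewrite dprod_distr; apply: eq_bigr => c _.
by rewrite -big_split.
Qed.

Lemma tmap_comp (Bl Bl' Bl'' : 'I_m -> finType) Phi Psi
  (x : leaf_coords Bl -> K) (c'' : leaf_coords Bl'') :
  tmap Psi (tmap Phi x) c'' =
  tmap (fun v (c : Bl v) (c2 : Bl'' v) => \sum_(c' : Bl' v) Phi v c c' * Psi v c' c2) x c''.
Proof.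
rewrite /tmap.
under eq_bigr do rewrite big_distrl /=.
rewrite exchange_big /=; apply: eq_bigr => c _.
rewrite dprod_distr big_distrr /=; apply: eq_bigr => c' _.
by rewrite -mulrA -big_split.
Qed.

Definition upd (Bl : 'I_m -> finType) (c : leaf_coords Bl) (v : 'I_m) (r : Bl v)
  : leaf_coords Bl := [ffun w => dfwith (fun w => c w) r w].
Arguments upd [Bl] c v r.

Lemma upd_in Bl (c : leaf_coords Bl) v r : upd c v r v = r.
Proof. by rewrite ffunE dfwith_in. Qed.

Lemma upd_out Bl (c : leaf_coords Bl) v r w : v != w -> upd c v r w = c w.
Proof. by move=> h; rewrite ffunE dfwith_out. Qed.

Lemma upd_id Bl (c : leaf_coords Bl) v : upd c v (c v) = c.
Proof.
apply/ffunP => w; have [<-|h] := eqVneq v w; first by rewrite upd_in.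
by rewrite upd_out.
Qed.

Lemma tmap_fix (Bl : 'I_m -> finType) (E : forall v, Bl v -> Bl v -> K)
  (x : leaf_coords Bl -> K) :
  (forall v (c : leaf_coords Bl) (s : Bl v),
     \sum_(r : Bl v) x (upd c v r) * E v r s = x (upd c v s)) ->
  tmap E x =1 x.
Proof.
move=> H.
pose f j v (a b : Bl v) := if (v < j)%N then E v a b else (a == b)%:R.
pose T j (c'' : leaf_coords Bl) := \sum_(c : leaf_coords Bl) x c * \prod_(v < m) f j v (c v) (c'' v).
suff : forall j, (j <= m)%N -> T j =1 x.
  move=> /(_ m (leqnn m)) HT c''; rewrite -HT /T /tmap.
  by apply: eq_bigr => c _; congr (_ * _); apply: eq_bigr => v _; rewrite /f ltn_ord.
elim=> [|j IH] hj c''.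
  have f0 : forall c : leaf_coords Bl,
      \prod_(v < m) f 0%N v (c v) (c'' v) = (c == c'')%:R.
    by move=> c; rewrite -prod_eq_ind; apply: eq_bigr.
  rewrite /T (bigD1 c'') //= f0 eqxx mulr1 big1 ?addr0 //.
  by move=> c hc; rewrite f0 (negPf hc) mulr0.
pose v : 'I_m := Ordinal hj.
have step : T j.+1 c'' = \sum_(r : Bl v) T j (upd c'' v r) * E v r (c'' v).
  rewrite /T; under [RHS]eq_bigr do rewrite big_distrl /=.
  rewrite exchange_big /=; apply: eq_bigr => c _.
  under [RHS]eq_bigr do rewrite -mulrA.
  rewrite -big_distrr /=; congr (_ * _).
  rewrite (bigD1 v) //= [in RHS](eq_bigr (fun r => (c v == r)%:R * E v r (c'' v) *
      \prod_(w < m | w != v) f j w (c w) (c'' w))); last first.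
    move=> r _; rewrite (bigD1 v) //= upd_in /f /= ltnn mulrAC; congr (_ * _).
    by apply: eq_bigr => w hw; rewrite upd_out // eq_sym.
  rewrite -[RHS]big_distrl /= [X in _ = X * _](bigD1 (c v)) //= eqxx mul1r [X in _ = (_ + X) * _]big1 ?addr0; last first.
    by move=> r hr; rewrite eq_sym (negPf hr) mul0r.
  rewrite /f ltnSn; congr (_ * _); apply: eq_bigr => w hw.
  rewrite ltnS leq_eqVlt; suff -> : (w == j :> nat) = false by [].
  by apply/negP => /eqP hw'; move: hw; rewrite (_ : w = v) ?eqxx //; apply: val_inj.
rewrite step.
under eq_bigr do rewrite IH ?(ltnW hj) //.
by rewrite H upd_id.
Qed.

End Tensor.
Arguments upd [m Bl] c v r.

Section Poly.
Variable K : fieldType.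

Lemma msizeM_le2 n (p q : {mpoly K[n]}) :
  (msize (p * q) <= (msize p).-1 + msize q)%N.
Proof.
have [->|nzp] := eqVneq p 0; first by rewrite mul0r msize0.
have [->|nzq] := eqVneq q 0; first by rewrite mulr0 msize0.
rewrite msizeM //.
have : (0 < msize p)%N by rewrite lt0n msize_poly_eq0.
by case: (msize p) => // a _; rewrite addSn.
Qed.

Lemma msize_exp_le n (p : {mpoly K[n]}) e :
  (msize p <= 2)%N -> (msize (p ^+ e) <= e.+1)%N.
Proof.
move=> hp; elim: e => [|e IH]; first by rewrite expr0 msize1.
rewrite exprS; apply: leq_trans (msizeM_le2 _ _) _.
by move: hp IH; case: (msize p) => [|[|[|a]]] //=; lia.
Qed.

Lemma msize_prod_le n (I : Type) (r : seq I) (F : I -> {mpoly K[n]}) :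
  (msize (\prod_(i <- r) F i) <= (\sum_(i <- r) (msize (F i)).-1).+1)%N.
Proof.
elim: r => [|a r IH]; first by rewrite !big_nil msize1.
rewrite !big_cons; apply: leq_trans (msizeM_le2 _ _) _.
by rewrite -addnS leq_add2l.
Qed.

Lemma msize_comp_le n k (q : {mpoly K[n]}) (lq : n.-tuple {mpoly K[k]}) :
  (forall i, msize (tnth lq i) <= 2)%N -> (msize (q \mPo lq) <= msize q)%N.
Proof.
move=> H; rewrite comp_mpolyE.
have := @msize_sum _ _ _ (msupp q) (fun m => q@_m *: \prod_(i < n) tnth lq i ^+ m i) predT.
move=> /leq_trans; apply.
apply/bigmax_leqP_seq => mm hm _.
apply: leq_trans (msizeZ_le _ _) _.
apply: leq_trans; first exact: msize_prod_le.
have : (mdeg mm < msize q)%N by apply: msize_mdeg_lt.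
suff : (\sum_(i < n) (msize (tnth lq i ^+ mm i)).-1 <= mdeg mm)%N.
  by move=> h1 h2; exact: leq_ltn_trans h1 h2.
rewrite mdegE; apply: leq_sum => i _.
have := msize_exp_le (mm i) (H i).
by case: (msize _) => //= a; rewrite ltnS.
Qed.

Lemma lin_poly (C C' : finType) (L : C -> C' -> K) (q : {mpoly K[#|C'|]}) :
  exists q' : {mpoly K[#|C|]}, (msize q' <= msize q)%N /\
    forall x, peval q' x = peval q (fun c' => \sum_(c : C) x c * L c c').
Proof.
pose lq := [tuple \sum_(c : C) L c (enum_val i) *: 'X_(enum_rank c) | i < #|C'|].
exists (q \mPo lq); split.
  apply: msize_comp_le => i; rewrite tnth_mktuple.
  apply: leq_trans (@msize_sum _ _ _ _ _ _) _.
  apply/bigmax_leqP_seq => c _ _.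
  by apply: leq_trans (msizeZ_le _ _) _; rewrite msizeX mdeg1.
move=> x; rewrite /peval comp_mpoly_meval; apply: meval_eq => i.
rewrite tnth_mktuple raddf_sum /=; apply: eq_bigr => c _.
by rewrite mevalZ mevalXU enum_rankK mulrC.
Qed.

Lemma closure_lin (C C' : finType) (L : C -> C' -> K)
  (S : (C -> K) -> Prop) (S' : (C' -> K) -> Prop) :
  (forall y, S y -> S' (fun c' => \sum_(c : C) y c * L c c')) ->
  forall x, zariski_closure S x ->
    zariski_closure S' (fun c' => \sum_(c : C) x c * L c c').
Proof.
move=> HS x Hx p Hp.
have [q' [_ Hq']] := lin_poly L p.
rewrite -Hq'; apply: Hx => y Sy; rewrite Hq'; exact: Hp (HS y Sy).
Qed.

End Poly.

Section MxLemmas.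
Variable K : fieldType.

Lemma minor_extract (p q r : nat) (A : 'M[K]_(p, q)) : (r <= \rank A)%N ->
  exists (f : 'I_r -> 'I_p) (g : 'I_r -> 'I_q),
    \det (\matrix_(i, j) A (f i) (g j)) != 0.
Proof.
move=> hr.
pose f0 := maxrankfun A.
pose f := fun i : 'I_r => f0 (widen_ord hr i).
pose R1 := rowsub f A.
have eR1 : R1 = (pid_mx r : 'M_(r, \rank A)) *m rowsub f0 A.
  apply/matrixP => i j; rewrite !mxE (bigD1 (widen_ord hr i)) //= big1.
    by rewrite !mxE /= eqxx ltn_ord mul1r addr0.
  move=> k hk; rewrite !mxE /=.
  have -> : (i == k :> nat) = false.
    by apply/negP => /eqP e; move: hk; rewrite (_ : k = widen_ord hr i) ?eqxx //; apply: val_inj.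
  by rewrite mul0r.
have rR1 : \rank R1 = r.
  by rewrite eR1 mxrankMfree ?maxrowsub_free // rank_pid_mx.
have hfull : row_full R1^T by rewrite /row_full mxrank_tr rR1.
pose g := fullrankfun hfull.
exists f, g.
have := fullrowsub_unit hfull; rewrite unitmxE unitfE -det_tr.
congr (_ != 0); congr (\det _); apply/matrixP => i j; rewrite !mxE.
by [].
Qed.

Definition fU n p q (A : 'M[K]_(p, q)) : 'M[K]_(p, n) :=
  col_base A *m pid_mx (\rank A).
Definition fV n p q (A : 'M[K]_(p, q)) : 'M[K]_(n, q) :=
  pid_mx (\rank A) *m row_base A.

Lemma fUV n p q (A : 'M[K]_(p, q)) : (\rank A <= n)%N ->
  fU n A *m fV n A = A.
Proof.
move=> h; rewrite /fU /fV mulmxA -[col_base A *m _ *m _]mulmxA mul_pid_mx.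
by rewrite minnn (minn_idPr h) pid_mx_1 mulmx1 mulmx_base.
Qed.

End MxLemmas.

Section Minor.
Variables (K : fieldType) (G : finGroupType) (Br : finType) (actr : {action G &-> Br}).
Variables (m : nat) (Bl : 'I_m -> finType) (actl : forall v, {action G &-> Bl v}).

Lemma det_lowrank (r s : nat) (X : 'M[K]_(r, s)) (Z : 'M[K]_(s, r)) :
  (s < r)%N -> \det (X *m Z) = 0.
Proof.
move=> hsr.
have hrk : (\rank (X *m Z) < r)%N.
  exact: leq_ltn_trans (leq_trans (mxrankM_maxl _ _) (rank_leq_col _)) hsr.
apply/eqP; apply: contraTT hrk => hdet; rewrite -leqNgt.
have : (X *m Z) \in unitmx by rewrite unitmxE unitfE.
by rewrite -row_free_unit => /eqP ->.
Qed.

Lemma minor_closure (v : 'I_m) (r : nat) (hr : (#|Br| < r)%N)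
  (rho : 'I_r -> Bl v) (sig : 'I_r -> leaf_coords Bl) (y : leaf_coords Bl -> K) :
  equivariant_model K actr actl y ->
  \det (\matrix_(a, b) y (upd (sig b) v (rho a))) = 0.
Proof.
move=> Hy.
pose p : {mpoly K[#|leaf_coords Bl|]} :=
  \det (\matrix_(a, b) 'X_(enum_rank (upd (sig b) v (rho a)))).
have Hp : forall z, peval p z = \det (\matrix_(a, b) z (upd (sig b) v (rho a))).
  move=> z; rewrite /peval /p -det_map_mx; congr (\det _).
  by apply/matrixP => a b; rewrite !mxE /= (mevalXU (fun i : 'I_#|leaf_coords Bl| => z (enum_val i))) enum_rankK.
rewrite -Hp; apply: Hy => z [A [_ Hz]]; rewrite Hp.
pose X : 'M[K]_(r, #|Br|) := \matrix_(a, i) A v (enum_val i) (rho a).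
pose Z : 'M[K]_(#|Br|, r) :=
  \matrix_(i, b) \prod_(w < m | w != v) A w (enum_val i) (sig b w).
have -> : \matrix_(a, b) z (upd (sig b) v (rho a)) = X *m Z.
  apply/matrixP => a b; rewrite !mxE Hz.
  rewrite (reindex (@enum_val Br predT)) /=; last by apply/onW_bij/enum_val_bij.
  apply: eq_bigr => i _; rewrite !mxE (bigD1 v) //= upd_in; congr (_ * _).
  by apply: eq_bigr => w hw; rewrite upd_out // eq_sym.
exact: det_lowrank.
Qed.

End Minor.

Section PermRep.
Variables (K : fieldType) (G : finGroupType) (T : finType) (act : {action G &-> T}).

Local Notation ev := (@enum_val T predT).
Local Notation er := (@enum_rank T).

Definition prho (g : G) : 'M[K]_#|T| :=
  \matrix_(j, l) ((act (ev j) g == ev l)%:R).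

Lemma ev_eq (j l : 'I_#|T|) : (ev j == ev l) = (j == l).
Proof. by apply/eqP/eqP => [/enum_val_inj|->]. Qed.

Lemma prho_rowE (g : G) (i : 'I_#|T|) (c : 'I_#|T| -> K) :
  \sum_j prho g i j * c j = c (er (act (ev i) g)).
Proof.
rewrite (bigD1 (er (act (ev i) g))) //= big1 ?addr0.
  by rewrite mxE enum_rankK eqxx mul1r.
move=> j hj; rewrite mxE.
suff -> : (act (ev i) g == ev j) = false by rewrite mul0r.
by apply/negP => /eqP e; move: hj; rewrite e enum_valK eqxx.
Qed.

Lemma prho_colE (g : G) (l : 'I_#|T|) (c : 'I_#|T| -> K) :
  \sum_j c j * prho g j l = c (er (act (ev l) (g^-1)%g)).
Proof.
rewrite (bigD1 (er (act (ev l) (g^-1)%g))) //= big1 ?addr0.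
  by rewrite mxE enum_rankK actKV eqxx mulr1.
move=> j hj; rewrite mxE.
suff -> : (act (ev j) g == ev l) = false by rewrite mulr0.
apply/negP => /eqP e; move: hj; rewrite -e actK enum_valK eqxx //.
Qed.

Lemma prho1 : prho 1%g = 1%:M.
Proof. by apply/matrixP => j l; rewrite !mxE act1 ev_eq. Qed.

Lemma prhoM g h : prho (g * h)%g = prho g *m prho h.
Proof.
apply/matrixP => j l; rewrite [RHS]mxE prho_rowE !mxE enum_rankK actM.
by [].
Qed.

Lemma prho_repr : mx_repr [set: G] prho.
Proof. by split; [exact: prho1 | move=> g h _ _; exact: prhoM]. Qed.

Definition prepr := MxRepresentation prho_repr.

Variables (P : 'M[K]_#|T|) (HP : P \in unitmx)
  (HD : forall g, is_diag_mx (P *m prho g *m invmx P)).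

Definition Dg g := P *m prho g *m invmx P.
Definition dd (j : 'I_#|T|) (g : G) := Dg g j j.
Definition dchar j : {ffun G -> K} := [ffun g => dd j g].

Lemma Dg_off g j l : j != l -> Dg g j l = 0.
Proof.
move=> h; have /is_diag_mxP := HD g; apply.
exact: h.
Qed.

Lemma DgM g h : Dg (g * h)%g = Dg g *m Dg h.
Proof.
rewrite /Dg prhoM !mulmxA; congr (_ *m _).
by rewrite mulmxKV.
Qed.

Lemma prhoE g : prho g = invmx P *m Dg g *m P.
Proof. by rewrite /Dg !mulmxA mulVmx // mul1mx mulmxKV. Qed.

Lemma ddM j g h : dd j (g * h)%g = dd j g * dd j h.
Proof.
rewrite /dd DgM mxE (bigD1 j) //= big1 ?addr0 //.
by move=> l hl; rewrite Dg_off ?mul0r // eq_sym.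
Qed.

Lemma dd1 j : dd j 1%g = 1.
Proof. by rewrite /dd /Dg prho1 mulmx1 mulmxV // mxE eqxx. Qed.

Lemma ddV j g : dd j (g^-1)%g * dd j g = 1.
Proof. by rewrite -ddM mulVg dd1. Qed.

Lemma dd_neq0 j g : dd j g != 0.
Proof. by apply/eqP => h; move: (ddV j g); rewrite h mulr0 => /eqP; rewrite eq_sym oner_eq0. Qed.

Lemma dd_orth j l :
  \sum_(h : G) dd j (h^-1)%g * dd l h = if dchar j == dchar l then #|G|%:R else 0.
Proof.
case: eqP => [e|ne].
  rewrite (eq_bigr (fun _ => 1)) ?sumr_const //.
  move=> h _; have -> : dd l h = dd j h.
    by move: (congr1 (fun f : {ffun G -> K} => f h) e); rewrite !ffunE.
  by rewrite ddV.
have [g0 hg0] : exists g0, dd j g0 != dd l g0.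
  case: (boolP [exists g, dd j g != dd l g]) => [/existsP//|/existsPn H].
  exfalso; apply: ne; apply/ffunP => g.
  by rewrite !ffunE; move: (H g); rewrite negbK => /eqP.
pose chi h := dd j (h^-1)%g * dd l h.
have chiM h : chi (g0 * h)%g = chi g0 * chi h.
  by rewrite /chi invMg !ddM; ring.
set S := \sum_(h : G) _.
have HS : S = chi g0 * S.
  rewrite /S big_distrr /= (reindex_inj (mulgI g0)) /=.
  by apply: eq_bigr => h _; rewrite -chiM.
have hc : chi g0 != 1.
  apply: contra hg0 => /eqP hc.
  have := ddV j g0; rewrite -hc /chi => e.
  apply/eqP; apply: (mulfI (dd_neq0 j g0^-1)).
  by rewrite e.
apply/eqP; move: HS => /eqP; rewrite -subr_eq0 -{1}[S]mul1r -mulrBl mulf_eq0 subr_eq0.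
by rewrite eq_sym (negPf hc).
Qed.


Definition Delta (chi : {ffun G -> K}) : 'M[K]_#|T| :=
  diag_mx (\row_l ((dchar l == chi)%:R)).

Lemma Dg_conjE g h (F : 'M[K]_#|T|) j l :
  (Dg g *m F *m Dg h) j l = dd j g * F j l * dd l h.
Proof.
rewrite mxE (bigD1 l) //= big1 ?addr0; last first.
  by move=> k hk; rewrite Dg_off ?mulr0.
congr (_ * _); rewrite mxE (bigD1 j) //= big1 ?addr0 //.
by move=> k hk; rewrite Dg_off ?mul0r // eq_sym.
Qed.

Lemma key_rep_mx (HG0 : #|G|%:R != 0 :> K) (n N : nat) (M : 'M[K]_(N, #|T|))
  (hM : (\rank M <= n)%N) :
  exists (U : 'M[K]_(#|T|, n)) (V : 'M[K]_(n, #|T|)),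
    forall u : 'rV[K]_#|T|, (u <= M)%MS ->
      u *m \sum_(h : G) (prho (h^-1)%g *m (U *m V) *m prho h) = u.
Proof.
pose X := M *m invmx P.
pose Q chi := pinvmx (X *m Delta chi) *m (X *m Delta chi).
have hQ chi : (\rank (Q chi) <= n)%N.
  apply: leq_trans (mxrankM_maxr _ _) _.
  apply: leq_trans (mxrankM_maxl _ _) _.
  by apply: leq_trans (mxrankM_maxl _ _) _.
pose U' : 'M[K]_(#|T|, n) := \matrix_(t, i) (#|G|%:R^-1 * fU n (Q (dchar t)) t i).
pose V' : 'M[K]_(n, #|T|) := \matrix_(i, t) fV n (Q (dchar t)) i t.
exists (invmx P *m U'), (V' *m P) => u hu.
pose Bk := \sum_(h : G) (Dg (h^-1)%g *m (U' *m V') *m Dg h).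
have -> : \sum_(h : G) (prho (h^-1)%g *m (invmx P *m U' *m (V' *m P)) *m prho h)
    = invmx P *m Bk *m P.
  rewrite /Bk mulmx_sumr mulmx_suml; apply: eq_bigr => h _.
  rewrite !prhoE !mulmxA !(mulmxK HP).
  by [].
pose u' := u *m invmx P.
have hu' : (u' <= X)%MS by apply: submxMr.
suff Hu' : u' *m Bk = u'.
  by rewrite !mulmxA -/u' Hu' mulmxKV.
apply/rowP => l; rewrite mxE.
have HBk j : Bk j l = (dchar j == dchar l)%:R * Q (dchar l) j l.
  rewrite /Bk summxE.
  under eq_bigr do rewrite Dg_conjE.
  rewrite (eq_bigr (fun h => (dd j (h^-1)%g * dd l h) * (U' *m V') j l)); last first.
    move=> h _; ring.
  rewrite -big_distrl /= dd_orth.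
  case: eqP => e; last by rewrite mul0r mul0r.
  rewrite mul1r mxE.
  have -> : \sum_i U' j i * V' i l = #|G|%:R^-1 * (fU n (Q (dchar l)) *m fV n (Q (dchar l))) j l.
    rewrite mxE big_distrr /=; apply: eq_bigr => i _.
    by rewrite !mxE e mulrA.
  by rewrite fUV // mulrA mulfV // mul1r.
under eq_bigr do rewrite HBk.
have Hd : (u' *m Delta (dchar l) *m Q (dchar l)) = u' *m Delta (dchar l).
  by rewrite /Q mulmxA mulmxKpV // submxMr.
have := congr1 (fun A : 'rV[K]_#|T| => A 0 l) Hd.
rewrite [in RHS]mul_mx_diag !mxE eqxx mulr1 => <-.
apply: eq_bigr => j _.
by rewrite mul_mx_diag !mxE mulrA.
Qed.

End PermRep.

Lemma ddX (K : fieldType) (G : finGroupType) (T : finType) (act : {action G &-> T})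
  (P : 'M[K]_#|T|) (HP : P \in unitmx)
  (HD : forall g, is_diag_mx (P *m prho K act g *m invmx P)) j (x : G) e :
  dd act P j (x ^+ e)%g = dd act P j x ^+ e.
Proof.
elim: e => [|e IH]; first by rewrite expg0 expr0 dd1.
by rewrite expgS ddM // IH exprS.
Qed.

Lemma cardG_neq0 (K : fieldType) (G : finGroupType) (HKsplit : splits_1dim K G) :
  #|G|%:R != 0 :> K.
Proof.
apply/negP => H0.
have Hpos : (0 < #|G|)%N by apply/card_gt0P; exists 1%g.
have [p hp] := natf0_pchar Hpos H0.
have pp := pcharf_prime hp.
have hdv : (p %| #|[set: G]|)%N by rewrite cardsT (dvdn_pcharf hp).
have [x _ hx] := Cauchy pp hdv.
pose act : {action G &-> G} := 'R%act.
have [P HP HD] := HKsplit _ (prepr K act).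
have hd1 : forall j, dd act P j x = 1.
  move=> j; set a := dd act P j x.
  have ha : a ^+ p = 1 by rewrite /a -ddX // -hx expg_order dd1.
  have pn : [pchar K].-nat p by rewrite pnatE.
  have : (a - 1) ^+ p == 0.
    by rewrite exprDn_pchar // exprNn_pchar // ha expr1n subrr.
  by rewrite expf_eq0 prime_gt0 //= subr_eq0 => /eqP.
have hD : Dg act P x = 1%:M.
  apply/matrixP => j l; rewrite [RHS]mxE.
  have [<-|hjl] := eqVneq j l; first exact: hd1.
  by rewrite Dg_off.
have hrho : prho K act x = 1%:M.
  by rewrite (@prhoE _ _ _ act P HP x) hD mulmx1 mulVmx.
have := congr1 (fun A : 'M[K]_#|G| => A (enum_rank 1%g) (enum_rank 1%g)) hrho.
rewrite /= !mxE !enum_rankK eqxx /= mul1g.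
case: eqP => [x1|_ /eqP]; last by rewrite eq_sym oner_eq0.
by move: hx pp; rewrite x1 order1 => <-.
Qed.

Lemma key_rep (K : fieldType) (G : finGroupType) (T : finType)
  (act : {action G &-> T}) (HKsplit : splits_1dim K G)
  (n N : nat) (M : 'M[K]_(N, #|T|)) (hM : (\rank M <= n)%N) :
  exists (lam w : 'I_n -> T -> K), forall u : 'rV[K]_#|T|, (u <= M)%MS ->
    forall s : T,
      \sum_(r : T) u 0 (enum_rank r) *
        (\sum_(hi : G * 'I_n) lam hi.2 (act r (hi.1^-1)%g) * w hi.2 (act s (hi.1^-1)%g))
      = u 0 (enum_rank s).
Proof.
have [P HP HD] := HKsplit _ (prepr K act).
have [U [V HUV]] := key_rep_mx HP HD (cardG_neq0 HKsplit) hM.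
exists (fun i t => U (enum_rank t) i), (fun i t => V i (enum_rank t)) => u hu s.
rewrite -[RHS](congr1 (fun A : 'rV[K]_#|T| => A 0 (enum_rank s)) (HUV u hu)) /=.
rewrite mxE (reindex (@enum_val T predT)) /=; last by apply/onW_bij/enum_val_bij.
apply: eq_bigr => j _; rewrite enum_valK; congr (_ * _).
rewrite summxE -(pair_bigA _ (fun h i => U (enum_rank (act (enum_val j) (h^-1)%g)) i *
   V i (enum_rank (act s (h^-1)%g)))) /=.
apply: eq_bigr => h _.
rewrite mxE.

rewrite (@prho_colE K G T act h (enum_rank s)
  (fun j0 => (prho K act (h^-1)%g *m (U *m V)) j j0)) /= enum_rankK.
rewrite mxE (@prho_rowE K G T act (h^-1)%g j (fun k => (U *m V) k _)) mxE.
by [].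
Qed.

Section Main.
Variables (K : fieldType) (G : finGroupType) (m n : nat).

Lemma Phi_equiv (Bl : 'I_m -> finType) (actl : forall v, {action G &-> Bl v})
  (lam : forall v, 'I_n -> Bl v -> K) :
  equiv_map actl (fun v : 'I_m => regn_action G n)
    (fun v (c : Bl v) (hi : G * 'I_n) => lam v hi.2 (actl v c (hi.1^-1)%g)).
Proof.
move=> v g c [h i] /=; rewrite -actM; congr (lam _ _ (actl v c _)).
by rewrite invMg mulgA mulgV mul1g.
Qed.

Lemma Psi_equiv (Bl : 'I_m -> finType) (actl : forall v, {action G &-> Bl v})
  (w : forall v, 'I_n -> Bl v -> K) :
  equiv_map (fun v : 'I_m => regn_action G n) actl
    (fun v (hi : G * 'I_n) (s : Bl v) => w v hi.2 (actl v s (hi.1^-1)%g)).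
Proof.
move=> v g [h i] s /=; rewrite -actM; congr (w _ _ (actl v s _)).
by rewrite invMg mulgA mulgV mul1g.
Qed.

End Main.

Theorem lemma6p6 (G : finGroupType) (K : fieldType)
    (HGab : abelian [set: G]) (HKinf : infinite_field K)
    (HKsplit : splits_1dim K G)
    (m : nat) (Br : finType) (actr : {action G &-> Br})
    (Bl : 'I_m -> finType) (actl : forall v : 'I_m, {action G &-> Bl v})
    (n : nat) (Hn : (#|Br| < n)%N) (D : nat) :
  defined_in_degree D
    (equivariant_model K actr (fun v : 'I_m => regn_action G n)) ->
  defined_in_degree D (equivariant_model K actr actl).
Proof.
move=> [P' [HdegP' HiffP']].
exists (fun q => exists p (Phi : forall v, Bl v -> (G * 'I_n)%type -> K),
   [/\ P' p, equiv_map actl (fun v : 'I_m => regn_action G n) Phi,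
       (msize q <= msize p)%N &
       forall x, peval q x = peval p (tmap Phi x)]).
split.
  by move=> q [p [Phi [Hp _ Hq _]]]; exact: leq_trans Hq (HdegP' p Hp).
move=> x; split.
  move=> Hx q [p [Phi [Hp HPhi _ Hqx]]].
  rewrite Hqx; apply: (proj1 (HiffP' _)) Hp.
  have HH := (@closure_lin K _ _ (fun (c : leaf_coords Bl) (c' : leaf_coords (fun _ : 'I_m => (G * 'I_n)%type)) => \prod_(v < m) Phi v (c v) (c' v))
    (star_param_set K actr actl)
    (star_param_set K actr (fun v : 'I_m => regn_action G n))
    (fun y Sy => tmap_param HPhi Sy) x Hx).
  exact: HH.
move=> Hq.
have HX : forall Phi, equiv_map actl (fun v : 'I_m => regn_action G n) Phi ->
    equivariant_model K actr (fun v : 'I_m => regn_action G n) (tmap Phi x).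
  move=> Phi HPhi; apply/(proj2 (HiffP' _)) => p Hp.
  have [q' [hq' Hq']] := lin_poly (fun (c : leaf_coords Bl) (c' : leaf_coords (fun _ : 'I_m => (G * 'I_n)%type)) => \prod_(v < m) Phi v (c v) (c' v)) p.
  rewrite /tmap -Hq'; apply: Hq; exists p, Phi; split => //.
pose Mv v : 'M[K]_(#|leaf_coords Bl|, #|Bl v|) :=
  \matrix_(i, j) x (upd (enum_val i) v (enum_val j)).
have hk : (#|Br| < #|Br|.+1)%N by [].
have Hrk : forall v, (\rank (Mv v) <= #|Br|)%N.
  move=> v; rewrite leqNgt; apply/negP => hr.
  have [f [g hdet]] := minor_extract hr.
  pose sig a := (enum_val (f a) : leaf_coords Bl).
  pose rho a := (enum_val (g a) : Bl v).
  pose lam w (i : 'I_n) (c : Bl w) : K :=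
    ((i < #|Br|.+1)%N && (c == upd (sig (inord i)) v (rho (inord i)) w))%:R.
  pose rho' (a : 'I_#|Br|.+1) : (G * 'I_n)%type := (1%g, widen_ord Hn a).
  pose sig' (b : 'I_#|Br|.+1) : leaf_coords (fun _ : 'I_m => (G * 'I_n)%type) :=
    [ffun _ => (1%g, widen_ord Hn b)].
  have Hm := minor_closure hk rho' sig' (HX _ (Phi_equiv actl lam)).
  move: (Hm v) => {Hm} Hm.
  have Hent : forall a b, tmap (fun (w : 'I_m) (c : Bl w) (hi : G * 'I_n) =>
      lam w hi.2 (actl w c hi.1^-1%g)) x (upd (sig' b) v (rho' a))
      = x (upd (sig b) v (rho a)).
    move=> a b; rewrite /tmap (bigD1 (upd (sig b) v (rho a))) //=.
    rewrite [X in _ * X + _ = _]big1 ?mulr1; last first.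
      move=> w _.
      have [e|ne] := eqVneq v w.
        move: e => <-; rewrite !upd_in /= invg1 act1 /lam /= ltn_ord /= inord_val.
        by rewrite upd_in eqxx.
      rewrite !upd_out //= ffunE /= invg1 act1 /lam /= ltn_ord /= inord_val.
      by rewrite !upd_out // eqxx.
    rewrite big1 ?addr0 //.
    move=> c hc.
    suff -> : \prod_(w < m) lam w (upd (sig' b) v (rho' a) w).2
        (actl w (c w) (upd (sig' b) v (rho' a) w).1^-1%g) = 0 by rewrite mulr0.
    have [w hw] : exists w, c w != upd (sig b) v (rho a) w.
      case: (boolP [exists w, c w != upd (sig b) v (rho a) w]) => [/existsP//|/existsPn H].
      by case/eqP: hc; apply/ffunP => w; move: (H w); rewrite negbK => /eqP.
    rewrite (bigD1 w) //=.
    have [e|ne] := eqVneq v w.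
      move: hw; move: e => <- hw.
      rewrite !upd_in /= invg1 act1 /lam /= ltn_ord /= inord_val upd_in.
      by rewrite upd_in in hw; rewrite (negPf hw) mul0r.
    move: hw; rewrite upd_out // => hw.
    rewrite !upd_out //= ffunE /= invg1 act1 /lam /= ltn_ord /= inord_val.
    by rewrite !upd_out // (negPf hw) mul0r.
  move: hdet; rewrite -det_tr.
  suff -> : (\matrix_(i, j) Mv v (f i) (g j))^T = \matrix_(a, b) tmap
       (fun (w : 'I_m) (c : Bl w) (hi : G * 'I_n) => lam w hi.2 (actl w c hi.1^-1%g))
       x (upd (sig' b) v (rho' a)) by rewrite Hm eqxx.
  by apply/matrixP => a b; rewrite !mxE Hent.
have Hrep : forall v, exists LW : {ffun 'I_n * Bl v -> K} * {ffun 'I_n * Bl v -> K},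
    [forall c : leaf_coords Bl, forall s : Bl v,
      \sum_(r : Bl v) x (upd c v r) *
        (\sum_(hi : G * 'I_n) LW.1 (hi.2, actl v r (hi.1^-1)%g) *
                              LW.2 (hi.2, actl v s (hi.1^-1)%g))
      == x (upd c v s)].
  move=> v.
  have [lam [w H]] := key_rep (actl v) HKsplit (leq_trans (Hrk v) (ltnW Hn)).
  exists ([ffun p => lam p.1 p.2], [ffun p => w p.1 p.2]).
  apply/forallP => c; apply/forallP => s; apply/eqP.
  have := H _ (row_sub (enum_rank c) (Mv v)) s.
  rewrite !mxE !enum_rankK => <-.
  apply: eq_bigr => r _; rewrite !mxE !enum_rankK; congr (_ * _).
  by apply: eq_bigr => hi _; rewrite !ffunE.
pose LW v := xchoose (Hrep v).
pose lam v (i : 'I_n) (c : Bl v) := (LW v).1 (i, c).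
pose w v (i : 'I_n) (c : Bl v) := (LW v).2 (i, c).
pose Phi := fun v (c : Bl v) (hi : G * 'I_n) => lam v hi.2 (actl v c (hi.1^-1)%g).
pose Psi := fun v (hi : G * 'I_n) (s : Bl v) => w v hi.2 (actl v s (hi.1^-1)%g).
have Hfix := tmap_fix (E := fun v r s => \sum_(c' : G * 'I_n) Phi v r c' * Psi v c' s)
  (fun v c s => eqP (forallP (forallP (xchooseP (Hrep v)) c) s)).
have Hy := HX Phi (Phi_equiv actl lam).
have Hz := @closure_lin K _ _
  (fun (c : leaf_coords (fun _ : 'I_m => (G * 'I_n)%type)) (c' : leaf_coords Bl) =>
     \prod_(v < m) Psi v (c v) (c' v))
  (star_param_set K actr (fun v : 'I_m => regn_action G n))
  (star_param_set K actr actl)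
  (fun y Sy => tmap_param (Psi_equiv actl w) Sy) _ Hy.
move=> p Hp; rewrite -(Hz p Hp) /peval; apply: meval_eq => i.
by rewrite -[LHS]Hfix -tmap_comp.
Qed.
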